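(* Let $G$ be a finite simple group and $c:X\twoheadrightarrow G$ a surjective generalized subgroup of $G$. Then every non-trivial homomorphism $f:X\to G$ can be written as $f=hc$ for some automorphism $h:G\to G$.
   Context: A homomorphism $c:X\to G$ is a generalized subgroup of $G$ if the map $\mathrm{Hom}(X,X)\to\mathrm{Hom}(X,G)$, $g\mapsto cg$, is injective. *)

(* Defs.v *)
From HB Require Import structures.
From mathcomp Require Import all_boot all_fingroup.
Set Implicit Arguments. Unset Strict Implicit. Unset Printing Implicit Defensive.
Local Open Scope group_scope.

Definition is_hom (X Y : groupType) (f : X -> Y) : Prop :=
  forall x y : X, f (x * y) = f x * f y.

(* c : X -> G is a generalized subgroup of G: the map Hom(X,X) -> Hom(X,G),
   g |-> c \o g, is injective. *)
Definition generalized_subgroup (X G : groupType) (c : X -> G) : Prop :=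
  forall g1 g2 : X -> X, is_hom g1 -> is_hom g2 ->
    (forall x, c (g1 x) = c (g2 x)) -> forall x, g1 x = g2 x.

(* Main.v *)
Require Import Defs.
From HB Require Import structures.
From mathcomp Require Import all_boot all_fingroup all_solvable.
From Stdlib Require Import ClassicalDescription Classical.
Set Implicit Arguments. Unset Strict Implicit. Unset Printing Implicit Defensive.
Local Open Scope group_scope.

Section Hom.
Variables (X Y : groupType) (f : X -> Y).
Hypothesis Hf : is_hom f.

Lemma hom1 : f 1 = 1.
Proof. by apply: (@mulgI _ (f 1)); rewrite -Hf !mulg1. Qed.

Lemma homV x : f x^-1 = (f x)^-1.
Proof. by apply: (@mulgI _ (f x)); rewrite -Hf !mulgV hom1. Qed.

Lemma homX x n : f (x ^+ n) = (f x) ^+ n.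
Proof. elim: n => [|n IH]; first by rewrite !expg0 hom1. by rewrite !expgS Hf IH. Qed.

Lemma hom_eq x y : f (x^-1 * y) = 1 -> f x = f y.
Proof. rewrite Hf homV => h; apply: (@mulgI _ (f x)^-1); by rewrite h mulVg. Qed.

Lemma hom_eq' x y : f x = f y -> f (x^-1 * y) = 1.
Proof. by rewrite Hf homV => ->; rewrite mulVg. Qed.
End Hom.

Section Prod.
Variable X : groupType.

Lemma prod_perm_central (I : eqType) (r1 r2 : seq I) (F : I -> X) :
  (forall i y, commute (F i) y) -> perm_eq r1 r2 ->
  \prod_(i <- r1) F i = \prod_(i <- r2) F i.
Proof.
move=> cF; elim: r1 r2 => [|a r1 IH] r2 pr.
  by move: pr; rewrite perm_sym => /perm_nilP ->.
have Ha : a \in r2 by rewrite -(perm_mem pr) mem_head.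
move: pr; case/splitPr: Ha => p1 p2 pr.
rewrite big_cons (IH (p1 ++ p2)); last first.
  by rewrite -(perm_cons a) (perm_trans pr) // (perm_catCA p1 [:: a] p2).
rewrite !big_cat big_cons /= mulgA (cF a) -mulgA //.
Qed.

Lemma prod_const_seq (I : Type) (r : seq I) (x : X) :
  \prod_(i <- r) x = x ^+ size r.
Proof. elim: r => [|a r IH]; first by rewrite big_nil. by rewrite big_cons IH expgS. Qed.

Lemma prod_reindex_central (T : finGroupType) (F : T -> X) (a : T) :
  (forall g y, commute (F g) y) ->
  \prod_(g : T) F (g * a) = \prod_(g : T) F g.
Proof.
move=> cF; rewrite -(big_map (fun g => g * a) xpredT F).
apply: prod_perm_central => //; apply: uniq_perm.
- by rewrite (map_inj_uniq (mulIg a)) index_enum_uniq.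
- exact: index_enum_uniq.
move=> y; rewrite mem_index_enum; apply/mapP; exists (y * a^-1).
  exact: mem_index_enum.
by rewrite mulgVK.
Qed.
End Prod.

Lemma pbP (P : Prop) : reflect P (if excluded_middle_informative P then true else false).
Proof. by case: excluded_middle_informative => h; constructor. Qed.

Section Main.
Variables (gT : finGroupType) (X : groupType) (c : X -> gT).
Hypothesis Hc : is_hom c.
Hypothesis Hgen : generalized_subgroup c.
Variable s : gT -> X.
Hypothesis sP : forall g, c (s g) = g.

Lemma hom_const1 : is_hom (fun _ : X => (1 : X)).
Proof. by move=> ??; rewrite mulg1. Qed.

Lemma central n : c n = 1 -> forall y, commute n y.
Proof.
move=> cn y.
have h1 : is_hom (fun x : X => x) by [].
have h2 : is_hom (fun x : X => x ^ n) by move=> ??; rewrite conjMg.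
have := Hgen h1 h2 (fun x => _) y.
rewrite /= => H.
have e : y = y ^ n.
  apply: H => x; rewrite conjgE !Hc homV // cn invg1 mul1g mulg1 //.
by rewrite /commute {1}e conjgE mulKVg.
Qed.

Lemma hom_into_N (phi : X -> X) : is_hom phi -> (forall x, c (phi x) = 1) ->
  forall x, phi x = 1.
Proof.
move=> hp cp x; apply: (Hgen hp hom_const1) => y; by rewrite cp hom1.
Qed.

Definition tr (x : X) : X := \prod_(g : gT) (s g * x * (s (g * c x))^-1).

Lemma tr_term_N g x : c (s g * x * (s (g * c x))^-1) = 1.
Proof. by rewrite !Hc homV // !sP mulgV. Qed.

Lemma tr_hom : is_hom tr.
Proof.
move=> x y; rewrite /tr.
transitivity (\prod_(g : gT) ((s g * x * (s (g * c x))^-1) *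
     (s (g * c x) * y * (s ((g * c x) * c y))^-1))).
  apply: eq_bigr => g _; rewrite Hc !mulgA mulgVK //.
rewrite prodgM_commute; last by move=> i j _ _; apply: central; apply: tr_term_N.
congr (_ * _).
have := @prod_reindex_central X gT (fun g => s g * y * (s (g * c y))^-1) (c x).
move=> ->; first by [].
by move=> g; apply: central; apply: tr_term_N.
Qed.

Lemma tr_N x : c (tr x) = 1.
Proof.
rewrite /tr; apply: (big_ind (fun z => c z = 1)); first exact: hom1.
  by move=> a b ha hb; rewrite Hc ha hb mulg1.
by move=> g _; apply: tr_term_N.
Qed.

Lemma torsion n : c n = 1 -> n ^+ size (index_enum gT) = 1.
Proof.
move=> cn; have := hom_into_N tr_hom tr_N n.
rewrite /tr (eq_bigr (fun _ => n)) ?prod_const_seq //.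
move=> g _; rewrite cn mulg1 -(central cn (s g)) mulgK //.
Qed.

Lemma size_enum_gt0 : 0 < size (index_enum gT).
Proof. by case: (index_enum gT) (mem_index_enum (1 : gT)). Qed.

End Main.

Section Cases.
Variables (gT : finGroupType) (X : groupType) (c : X -> gT).
Hypothesis Hc : is_hom c.
Hypothesis Hgen : generalized_subgroup c.
Variable s : gT -> X.
Hypothesis sP : forall g, c (s g) = g.
Variable f : X -> gT.
Hypothesis Hf : is_hom f.

Lemma caseB (Hnt : exists x, f x <> 1)
  (HN : forall x, exists n, c n = 1 /\ f n = f x) : False.
Proof.
pose F := [set y : gT | if excluded_middle_informative (exists x, f x = y) then true else false].
have inF x : f x \in F by rewrite inE; apply/pbP; exists x.
have inFP y : y \in F -> exists x, f x = y by rewrite inE => /pbP.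
have gF : group_set F.
  apply/group_setP; split; first by rewrite -(hom1 Hf); apply: inF.
  by move=> y z /inFP[x1 <-] /inFP[x2 <-]; rewrite -Hf; apply: inF.
pose FG := Group gF.
have abF : abelian FG.
  apply/centsP => y /inFP[x1 <-] z /inFP[x2 <-].
  have [n1 [cn1 <-]] := HN x1; have [n2 [cn2 <-]] := HN x2.
  by rewrite /commute -!Hf (central Hc Hgen cn1).
have ntF : FG :!=: 1.
  have [x hx] := Hnt; apply/trivgPn; exists (f x); first exact: inF.
  by apply/eqP.
have [M nMF pM] := sol_prime_factor_exists (abelian_sol abF) ntF.
set q := #|FG : M| in pM.
have : ~~ (FG \subset M) by rewrite -indexg_gt1 prime_gt1.
case/subsetPn => a aF aM.
have [x0 fx0] := inFP a aF.
have [n1 [cn1 fn1]] := HN x0; rewrite fx0 in fn1.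
have nFM : FG \subset 'N(M) := normal_norm nMF.
pose u := coset M a.
have Nf x : f x \in 'N(M) := subsetP nFM _ (inF x).
have uQ : u \in FG / M := mem_quotient _ aF.
have cardQ : #|FG / M| = q := card_quotient nFM.
have u1 : u != 1.
  by apply/eqP => /(coset_idr (subsetP nFM _ aF)); apply/negP.
have ou : #[u] = q.
  apply/(prime_nt_dvdP pM); first by rewrite order_eq1.
  by rewrite -cardQ order_dvdG.
have Qgen : (FG / M)%G = <[u]> :> {set _}.
  by apply: nt_gen_prime; [rewrite cardQ | rewrite !inE u1].
have hl x : exists i, coset M (f x) == u ^+ i.
  have : coset M (f x) \in <[u]> by rewrite -Qgen mem_quotient // inF.
  by case/cycleP => i ->; exists i.
pose l x := xchoose (hl x).
have lP x : coset M (f x) = u ^+ l x := eqP (xchooseP (hl x)).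
pose e := size (index_enum gT).
have n1e : n1 ^+ e = 1 := torsion Hc Hgen sP cn1.
have exo : exists j, (0 < j) && (n1 ^+ j == 1).
  by exists e; rewrite size_enum_gt0 n1e eqxx.
case: (ex_minnP exo) => o /andP[o0 /eqP n1o] omin.
have qo : q %| o.
  rewrite -ou order_dvdn /u -morphX ?(subsetP nFM _ aF) //.
  by rewrite -fn1 -(homX Hf) n1o (hom1 Hf) morph1.
pose n0 := n1 ^+ (o %/ q).
have q1 : 1 < q := prime_gt1 pM.
have n0q : n0 ^+ q = 1 by rewrite /n0 -expgnA divnK.
have n0nt : n0 != 1.
  apply/negP => /eqP h.
  have : o <= o %/ q.
    apply: omin; rewrite -/n0 h eqxx andbT divn_gt0 ?(ltnW q1) //.
    exact: dvdn_leq.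
  by rewrite leqNgt ltn_Pdiv.
have cn0 : c n0 = 1 by rewrite /n0 (homX Hc) cn1 expg1n.
have modq i j : i = j %[mod q] -> n0 ^+ i = n0 ^+ j.
  move=> h; rewrite (divn_eq i q) (divn_eq j q) h !expgnDr.
  by rewrite ![(_ * q)%N]mulnC !expgnA n0q !expg1n.
pose phi x := n0 ^+ l x.
have hphi : is_hom phi.
  move=> x y; rewrite /phi -expgnDr; apply: modq.
  apply/eqP; rewrite -ou -eq_expg_mod_order expgnDr -!lP Hf morphM ?Nf //.
have cphi x : c (phi x) = 1 by rewrite /phi (homX Hc) cn0 expg1n.
have := hom_into_N Hc Hgen hphi cphi n1.
rewrite /phi (modq _ 1%N); first by rewrite expg1; apply/eqP.
by apply/eqP; rewrite -ou -eq_expg_mod_order -lP fn1 expg1.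
Qed.

End Cases.

Section CaseA.
Variables (gT : finGroupType) (X : groupType) (c : X -> gT).
Hypothesis Hc : is_hom c.
Variable s : gT -> X.
Hypothesis sP : forall g, c (s g) = g.
Variable f : X -> gT.
Hypothesis Hf : is_hom f.

Lemma caseA (HK : forall k, f k = 1 -> c k = 1) :
  exists h : {perm gT}, h \in Aut [set: gT] /\ forall x, f x = h (c x).
Proof.
have fc x y : f x = f y -> c x = c y.
  move=> h; apply: (hom_eq Hc); apply: HK. have := hom_eq' Hf h. by [].
pose F := [set y : gT | if excluded_middle_informative (exists x, f x = y) then true else false].
have inF x : f x \in F by rewrite inE; apply/pbP; exists x.
pose t y := match excluded_middle_informative (exists x, f x == y) with
              left h => xchoose h | right _ => 1 end.
have tP x : f (t (f x)) = f x.
  rewrite /t; case: excluded_middle_informative => [h|[]]; last by exists x.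
  exact/eqP/(xchooseP h).
pose b y := c (t y).
have bP x : b (f x) = c x := fc _ _ (tP x).
have imT : b @: F = [set: gT].
  apply/setP => g; rewrite in_setT -(sP g) -bP imset_f // inF.
have injb : {in F &, injective b}.
  apply/imset_injP; rewrite eqn_leq leq_imset_card /= imT cardsT max_card.
  by [].
have cf x y : c x = c y -> f x = f y.
  by move=> h; apply: injb; rewrite ?inF // !bP.
pose h g := f (s g).
have hinj : injective h by move=> g1 g2 /fc; rewrite !sP.
exists (perm hinj); split.
  rewrite inE; apply/andP; split.
    by apply/subsetP => x _; exact: in_setT.
  apply/morphicP => g1 g2 _ _; rewrite !permE /h -Hf; apply: cf.
  by rewrite Hc !sP.
by move=> x; rewrite permE /h; apply: cf; rewrite sP.
Qed.
End CaseA.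

Unset Implicit Arguments.

Theorem lemma8p3 (gT : finGroupType) (X : groupType) (c : X -> gT)
    (HG : simple [set: gT])
    (Hc : is_hom c) (Hsurj : forall y : gT, exists x : X, c x = y)
    (Hgen : generalized_subgroup c)
    (f : X -> gT) (Hf : is_hom f) (Hnt : exists x : X, f x <> 1) :
  exists h : {perm gT}, h \in Aut [set: gT] /\ forall x : X, f x = h (c x).
Proof.
have sex g : exists x, c x == g by have [x <-] := Hsurj g; exists x.
pose s g := xchoose (sex g).
have sP g : c (s g) = g := eqP (xchooseP (sex g)).
case: (classic (exists k, f k = 1 /\ c k <> 1)) => [[k0 [fk0 ck0]] | nk]; last first.
  apply: (caseA Hc sP Hf) => k fk.
  case: (eqVneq (c k) 1) => // ne; exfalso; apply: nk; exists k; split => //.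
  exact/eqP.
exfalso; apply: (caseB Hc Hgen sP Hf Hnt).
pose S := [set g : gT | if excluded_middle_informative
                          (exists k, f k = 1 /\ c k = g) then true else false].
have inSP g : reflect (exists k, f k = 1 /\ c k = g) (g \in S).
  by rewrite inE; apply: pbP.
have fJ x z : f (x ^ z) = f x ^ f z by rewrite !conjgE !Hf (homV Hf).
have cJ x z : c (x ^ z) = c x ^ c z by rewrite !conjgE !Hc (homV Hc).
have SJ g y : g \in S -> g ^ y \in S.
  move/inSP=> [k [fk <-]]; apply/inSP; exists (k ^ s y); split.
    by rewrite fJ fk conj1g.
  by rewrite cJ sP.
have gS : group_set S.
  apply/group_setP; split.
    by apply/inSP; exists 1; rewrite (hom1 Hf) (hom1 Hc).
  move=> g1 g2 /inSP[k1 [f1 <-]] /inSP[k2 [f2 <-]]; apply/inSP.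
  by exists (k1 * k2); rewrite Hf Hc f1 f2 mulg1.
pose SG := Group gS.
have nS : SG <| [set: gT].
  rewrite /normal subsetT /=; apply/normsP => y _.
  apply/setP => g; rewrite mem_conjg; apply/idP/idP => H.
    by rewrite -(conjgKV y g); apply: SJ.
  exact: SJ.
have ck0S : c k0 \in SG by apply/inSP; exists k0.
case/simpleP: HG => _ /(_ _ nS) [S1 | ST].
  by move: ck0S; rewrite S1 inE => /eqP.
move=> x; have : c x \in SG by rewrite ST in_setT.
move/inSP => [k [fk ck]]; exists (k^-1 * x); split.
  by rewrite Hc (homV Hc) ck mulVg.
by rewrite Hf (homV Hf) fk invg1 mul1g.
Qed.
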